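(* Let $(X,d)$ be a compact metric space and $\omega:\Lambda\times X\to X$ an IFS with compact metric parameter space $\Lambda$. If $\omega$ has the finite shadowing property, then $\omega$ has the shadowing property.
   Context: Write $\omega_\lambda=\omega(\lambda,\cdot)$, with $\omega$ continuous. A chain is a sequence $\{y_k\}_{k\ge0}$ in $X$ such that for each $k\ge1$ there is $\lambda_k\in\Lambda$ with $y_k=\omega_{\lambda_k}(y_{k-1})$. A (finite or infinite) sequence $\{x_k\}$ is a $\delta$-chain if for each $k\ge1$ there is $\lambda_k\in\Lambda$ with $d(x_k,\omega_{\lambda_k}(x_{k-1}))\le\delta$. Shadowing property: for every $\varepsilon>0$ there is $\delta>0$ such that for every infinite $\delta$-chain $\{x_k\}_{k\ge0}$ there is a chain $\{y_k\}$ with $d(x_k,y_k)<\varepsilon$ for all $k\ge0$. Finite shadowing property: for every $\varepsilon>0$ there is $\delta>0$ such that for every finite $\delta$-chain $\{x_0,\dots,x_n\}$ there is a chain $\{y_k\}$ with $d(x_k,y_k)<\varepsilon$ for $k=0,\dots,n$. *)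

(* Defs.v *)
From HB Require Import structures.
From mathcomp Require Import all_boot all_order all_algebra.
From mathcomp Require Import all_classical all_reals all_analysis.
Set Implicit Arguments. Unset Strict Implicit. Unset Printing Implicit Defensive.
Import Order.TTheory GRing.Theory Num.Theory.
Local Open Scope classical_set_scope.
Local Open Scope ring_scope.

Section IFS.
Context {R : realType} {L X : metricType R}.

Definition is_chain (w : L -> X -> X) (y : nat -> X) : Prop :=
  forall k : nat, exists lam : L, y k.+1 = w lam (y k).

Definition is_delta_chain (w : L -> X -> X) (delta : R) (x : nat -> X) : Prop :=
  forall k : nat, exists lam : L, mdist (x k.+1) (w lam (x k)) <= delta.

Definition is_finite_delta_chain (w : L -> X -> X) (delta : R) (n : nat)
    (x : nat -> X) : Prop :=
  forall k : nat, (k < n)%N -> exists lam : L, mdist (x k.+1) (w lam (x k)) <= delta.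

Definition shadowing (w : L -> X -> X) : Prop :=
  forall eps : R, 0 < eps -> exists2 delta : R, 0 < delta &
    forall x : nat -> X, is_delta_chain w delta x ->
      exists y : nat -> X, is_chain w y /\ forall k, mdist (x k) (y k) < eps.

Definition finite_shadowing (w : L -> X -> X) : Prop :=
  forall eps : R, 0 < eps -> exists2 delta : R, 0 < delta &
    forall (n : nat) (x : nat -> X), is_finite_delta_chain w delta n x ->
      exists y : nat -> X, is_chain w y /\
        forall k, (k <= n)%N -> mdist (x k) (y k) < eps.
End IFS.

(* Main.v *)
Require Import Defs.
From HB Require Import structures.
From mathcomp Require Import all_boot all_order all_algebra.
From mathcomp Require Import all_classical all_reals all_analysis.
Import Order.TTheory GRing.Theory Num.Theory.
Local Open Scope classical_set_scope.
Local Open Scope ring_scope.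

Lemma ultra_lim (T : topologicalType) (U : set_system nat) (s : nat -> T) :
  UltraFilter U -> compact [set: T] -> exists p : T, s @ U --> p.
Proof.
move=> UU cT.
have [p [_ clp]] := cT (s @ U) _ (filterT).
exists p => B Bp.
have [//|UC] := in_ultra_setVsetC (s @^-1` B) UU.
have := clp (~` B) B UC Bp.
by case=> z [].
Qed.

Lemma ultra_oo : exists U : set_system nat, UltraFilter U /\ \oo `<=` U.
Proof. exact: ultraFilterLemma. Qed.

Lemma pair_lim (T : Type) (U : set_system nat) (A B C : topologicalType)
  (h : A * B -> C) (f : nat -> A) (g : nat -> B) a b :
  Filter U -> continuous h -> f @ U --> a -> g @ U --> b ->
  (fun n => h (f n, g n)) @ U --> h (a, b).
Proof.
move=> FU hc fa gb.
apply: (continuous_cvg _ (hc (a, b))).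
exact: cvg_pair.
Qed.

Theorem mainTheorem5 (R : realType) (L X : metricType R) (w : L -> X -> X) :
  compact [set: X] -> compact [set: L] ->
  continuous (fun p : L * X => w p.1 p.2) ->
  finite_shadowing w -> shadowing w.
Proof.
move=> cX cL wc fs eps eps0.
have e2 : 0 < eps / 2 by rewrite divr_gt0.
have [delta d0 H] := fs (eps / 2) e2.
exists delta => // x xc.
have : forall n, exists y : nat -> X, is_chain w y /\
    forall k, (k <= n)%N -> mdist (x k) (y k) < eps / 2.
  by move=> n; apply: H => k _; exact: xc k.
move=> /choice [Y HY].
have : forall n, exists lam : nat -> L, forall k, Y n k.+1 = w (lam k) (Y n k).
  by move=> n; have [f Hf] := choice (HY n).1; exists f.
move=> /choice [Lam HLam].
have [U [UU sU]] := ultra_oo.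
have : forall k, exists p : X, (fun n => Y n k) @ U --> p.
  by move=> k; exact: ultra_lim.
move=> /choice [y Hy].
have : forall k, exists p : L, (fun n => Lam n k) @ U --> p.
  by move=> k; exact: ultra_lim.
move=> /choice [lam Hlam].
exists y; split.
- move=> k; exists (lam k).
  apply: (cvg_unique (@metric_hausdorff _ X) (Hy k.+1)).
  have -> : (fun n => Y n k.+1) =
      (fun n => (fun p : L * X => w p.1 p.2) (Lam n k, Y n k)).
    by apply: funext => n /=; rewrite HLam.
  exact: (@pair_lim nat U L X X (fun p : L * X => w p.1 p.2)).
- move=> k.
  have A : \forall n \near U, mdist (y k) (Y n k) < eps / 2.
    by move: (Hy k) => /metricType_numDomainType.cvgr_dist_lt; apply.
  have B : U [set n | (k <= n)%N] by apply: sU; exists k.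
  have [n [h1 h2]] := filter_ex (filterI A B).
  rewrite (le_lt_trans (metric_triangle (x k) (Y n k) (y k)))//.
  rewrite [eps](splitr eps) ltrD// ?(HY n).2// metric_sym//.
Qed.
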